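(* Let $0<s_1<s_2<1$, $2s_1<d<\frac{2s_1s_2}{s_2-s_1}$, $a>0$, and suppose $g$ satisfies $(G_1)$–$(G_3)$ and $V$ satisfies $(V_1)$–$(V_3)$. Then $J|_{\mathcal{P}_a}$ is coercive: $$\lim_{\substack{u\in\mathcal{P}_a,\\ |\nabla_{s_1}u|_2^2+|\nabla_{s_2}u|_2^2\to\infty}}J(u)=+\infty.$$
   Context: For $s\in(0,1)$, $|\nabla_s u|_2^2=\int_{\mathbb{R}^d\times\mathbb{R}^d}\frac{|u(x)-u(y)|^2}{|x-y|^{d+2s}}dx\,dy$; $|\cdot|_p$ is the $L^p(\mathbb{R}^d)$ norm; $H^{s_1,s_2}(\mathbb{R}^d)=\{u\in L^2(\mathbb{R}^d):|\nabla_{s_1}u|_2<\infty,\ |\nabla_{s_2}u|_2<\infty\}$. $S_a=\{u\in H^{s_1,s_2}(\mathbb{R}^d):|u|_2^2=a\}$. $g:\mathbb{R}\to\mathbb{R}$, $G(s)=\int_0^sg$, $\widetilde G(s)=\frac12g(s)s-G(s)$. $(G_1)$: $g$ continuous, odd. $(G_2)$: there exist $\alpha,\beta$ with $2+\frac{4s_2}{d}<\alpha<\beta<\frac{2d}{d-2s_1}$ and $\alpha G(s)\le g(s)s\le\beta G(s)$ for all $s$. $(G_3)$: $\widetilde G'$ exists and $\widetilde G'(s)s\ge\alpha\widetilde G(s)$ for all $s$. $(V_1)$: $\lim_{|x|\to\infty}V(x)=\sup V=0$ and there is $\sigma_1\in[0,\frac{d(\alpha-2)-4}{d(\alpha-2)}]$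 with $|\int Vu^2dx|\le\sigma_1(|\nabla_{s_1}u|_2^2+|\nabla_{s_2}u|_2^2)$ for all $u$. $(V_2)$: $\nabla V$ exists a.e.; $W(x)=\frac12\langle\nabla V(x),x\rangle$ satisfies $\lim_{|x|\to\infty}W(x)=0$ and there is $\sigma_2$ with $0<\sigma_2<\min\{s_1-\frac{(\beta-2)d}{2\beta},\frac{d(\alpha-2)(1-\sigma_1)}{4}-s_2\}$ and $|\int Wu^2dx|\le\sigma_2(|\nabla_{s_1}u|_2^2+|\nabla_{s_2}u|_2^2)$ for all $u$. $(V_3)$: $\nabla W$ exists a.e.; $Y(x)=(d\alpha/2-d-1)W(x)+\langle\nabla W(x),x\rangle$ satisfies $|\int Yu^2dx|\le\sigma_3(|\nabla_{s_1}u|_2^2+|\nabla_{s_2}u|_2^2)$ for all $u$, for some $\sigma_3\in[0,s_1^2(d\alpha/2-d-2s_2)]$. (All $u\in H^{s_1,s_2}(\mathbb{R}^d)$.) $J(u)=\frac12|\nabla_{s_1}u|_2^2+\frac12|\nabla_{s_2}u|_2^2+\frac12\int_{\mathbb{R}^d}V(x)u^2dx-\int_{\mathbb{R}^d}G(u)dx$; $P(u)=s_1|\nabla_{s_1}u|_2^2+s_2|\nabla_{s_2}u|_2^2-\frac12\int_{\mathbb{R}^d}\langle\nabla V(x),x\rangle u^2dx-d\int_{\mathbb{R}^d}\widetilde G(u)dx$; $\mathcal{P}_a=\{u\in S_a:P(u)=0\}$. *)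

(* Defs.v *)
From HB Require Import structures.
From mathcomp Require Import all_boot all_order all_algebra.
From mathcomp Require Import all_classical all_reals all_analysis.
Import Order.TTheory GRing.Theory Num.Theory numFieldNormedType.Exports.
Local Open Scope classical_set_scope.
Local Open Scope ring_scope.

(* R^d is modelled as d.-tuple R, with its product sigma-algebra.            *)

Fixpoint leb_tuple (R : realType) (n : nat) : set (n.-tuple R) -> \bar R :=
  match n with
  | 0 => fun A => (\1_A [tuple])%:E
  | n'.+1 => pushforward ((@lebesgue_measure R) \x (leb_tuple R n'))%E
               (fun p : R * n'.-tuple R => [tuple of p.1 :: p.2])
  end.

Set Implicit Arguments. Unset Strict Implicit. Unset Printing Implicit Defensive.

Definition tsub (R : realType) (d : nat) (x y : d.-tuple R) : d.-tuple R :=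
  [tuple tnth x i - tnth y i | i < d].
Definition enorm (R : realType) (d : nat) (x : d.-tuple R) : R :=
  Num.sqrt (\sum_(i < d) tnth x i ^+ 2).

Definition tupd (R : realType) (d : nat) (x : d.-tuple R) (i : 'I_d) (t : R)
  : d.-tuple R := [tuple if j == i then t else tnth x j | j < d].
Definition has_partial (R : realType) (d : nat) (f : d.-tuple R -> R)
  (i : 'I_d) (x : d.-tuple R) : Prop :=
  derivable (fun t => f (tupd x i t)) (tnth x i) 1.
Definition partial (R : realType) (d : nat) (f : d.-tuple R -> R)
  (i : 'I_d) (x : d.-tuple R) : R :=
  derive1 (fun t => f (tupd x i t)) (tnth x i).
Definition has_gradient (R : realType) (d : nat) (f : d.-tuple R -> R)
  (x : d.-tuple R) : Prop := forall i, has_partial f i x.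
Definition grad_dot_x (R : realType) (d : nat) (f : d.-tuple R -> R)
  (x : d.-tuple R) : R := \sum_(i < d) partial f i x * tnth x i.

Definition L2sq (R : realType) (d : nat) (u : d.-tuple R -> R) : \bar R :=
  (\int[leb_tuple R d]_x ((u x) ^+ 2)%:E)%E.
(* |nabla_s u|_2^2 (as an extended real) *)
Definition gsemi (R : realType) (d : nat) (s : R) (u : d.-tuple R -> R) : \bar R :=
  (\int[(leb_tuple R d \x leb_tuple R d)%E]_z
     (((u z.1 - u z.2) ^+ 2) / (enorm (tsub z.1 z.2)) `^ (d%:R + 2 * s))%:E)%E.
Definition gnorm2 (R : realType) (d : nat) (s : R) (u : d.-tuple R -> R) : R :=
  fine (gsemi s u).

Definition H_s1s2 (R : realType) (d : nat) (s1 s2 : R) (u : d.-tuple R -> R) : Prop :=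
  [/\ measurable_fun setT u, (L2sq u < +oo)%E,
      (gsemi s1 u < +oo)%E & (gsemi s2 u < +oo)%E].
Definition S_a (R : realType) (d : nat) (s1 s2 a : R) (u : d.-tuple R -> R) : Prop :=
  H_s1s2 s1 s2 u /\ L2sq u = a%:E.

Definition Gprim (R : realType) (g : R -> R) (s : R) : R :=
  if 0 <= s then Rintegral (@lebesgue_measure R) `[0, s]%classic g
  else - Rintegral (@lebesgue_measure R) `[s, 0]%classic g.
Definition Gtilde (R : realType) (g : R -> R) (s : R) : R :=
  g s * s / 2 - Gprim g s.

Definition intRd (R : realType) (d : nat) (f : d.-tuple R -> R) : R :=
  fine (\int[leb_tuple R d]_x (f x)%:E)%E.

Definition J_func (R : realType) (d : nat) (s1 s2 : R) (V : d.-tuple R -> R)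
  (g : R -> R) (u : d.-tuple R -> R) : R :=
  gnorm2 s1 u / 2 + gnorm2 s2 u / 2 + intRd (fun x => V x * u x ^+ 2) / 2
  - intRd (fun x => Gprim g (u x)).

Definition P_func (R : realType) (d : nat) (s1 s2 : R) (V : d.-tuple R -> R)
  (g : R -> R) (u : d.-tuple R -> R) : R :=
  s1 * gnorm2 s1 u + s2 * gnorm2 s2 u
  - intRd (fun x => grad_dot_x V x * u x ^+ 2) / 2
  - d%:R * intRd (fun x => Gtilde g (u x)).

Definition Wfun (R : realType) (d : nat) (V : d.-tuple R -> R) (x : d.-tuple R) : R :=
  grad_dot_x V x / 2.
Definition Yfun (R : realType) (d : nat) (alpha : R) (V : d.-tuple R -> R)
  (x : d.-tuple R) : R :=
  (d%:R * alpha / 2 - d%:R - 1) * Wfun V x + grad_dot_x (Wfun V) x.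

Definition form_bound (R : realType) (d : nat) (s1 s2 sigma : R)
  (F : d.-tuple R -> R) : Prop :=
  forall u : d.-tuple R -> R, H_s1s2 s1 s2 u ->
    (leb_tuple R d).-integrable setT (fun x => (F x * u x ^+ 2)%:E) /\
    `| intRd (fun x => F x * u x ^+ 2) | <= sigma * (gnorm2 s1 u + gnorm2 s2 u).

Definition condG1 (R : realType) (g : R -> R) : Prop :=
  (forall x : R, {for x, continuous g}) /\ forall s, g (- s) = - g s.
Definition condG2 (R : realType) (d : nat) (s1 s2 alpha beta : R) (g : R -> R) : Prop :=
  [/\ 2 + 4 * s2 / d%:R < alpha, alpha < beta,
      beta < 2 * d%:R / (d%:R - 2 * s1) &
      forall s, alpha * Gprim g s <= g s * s /\ g s * s <= beta * Gprim g s].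
Definition condG3 (R : realType) (alpha : R) (g : R -> R) : Prop :=
  (forall s, derivable (Gtilde g) s 1) /\
  forall s, derive1 (Gtilde g) s * s >= alpha * Gtilde g s.

Definition condV1 (R : realType) (d : nat) (s1 s2 alpha sigma1 : R)
  (V : d.-tuple R -> R) : Prop :=
  [/\ (forall x, V x <= 0),
      (forall e : R, 0 < e -> exists r : R, forall x, r < enorm x -> `|V x| < e),
      0 <= sigma1 <= (d%:R * (alpha - 2) - 4) / (d%:R * (alpha - 2)) &
      form_bound s1 s2 sigma1 V].
Definition condV2 (R : realType) (d : nat) (s1 s2 alpha beta sigma1 sigma2 : R)
  (V : d.-tuple R -> R) : Prop :=
  [/\ (leb_tuple R d).-negligible [set x | ~ has_gradient V x],
      (forall e : R, 0 < e -> exists r : R, forall x,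
          r < enorm x -> has_gradient V x -> `|Wfun V x| < e),
      0 < sigma2 < Num.min (s1 - (beta - 2) * d%:R / (2 * beta))
                          (d%:R * (alpha - 2) * (1 - sigma1) / 4 - s2) &
      form_bound s1 s2 sigma2 (Wfun V)].
Definition condV3 (R : realType) (d : nat) (s1 s2 alpha sigma3 : R)
  (V : d.-tuple R -> R) : Prop :=
  [/\ (leb_tuple R d).-negligible [set x | ~ has_gradient (Wfun V) x],
      0 <= sigma3 <= s1 ^+ 2 * (d%:R * alpha / 2 - d%:R - 2 * s2) &
      form_bound s1 s2 sigma3 (Yfun alpha V)].

(* Main.v *)
Require Import Defs.
From HB Require Import structures.
From mathcomp Require Import all_boot all_order all_algebra.
From mathcomp Require Import all_classical all_reals all_analysis.
From mathcomp Require Import ring lra.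
Import Order.TTheory GRing.Theory Num.Theory numFieldNormedType.Exports.
Local Open Scope classical_set_scope.
Local Open Scope ring_scope.
Import HBNNSimple.

Section S.
Context (R : realType).
Local Open Scope ereal_scope.

Lemma muleDr_pos (c : R) (x y : \bar R) : (0 < c)%R ->
  c%:E * (x + y) = c%:E * x + c%:E * y.
Proof.
move=> c0; have c0' : (0 < c%:E) by rewrite lte_fin.
move: x y => [x| |] [y| |];
  rewrite ?addNye ?addeNy ?addye ?addey ?gt0_muley ?gt0_muleNy ?addNye ?addeNy ?addye ?addey //.
by rewrite -EFinD -!EFinM mulrDr.
Qed.

Lemma fsum_scale (I : choiceType) (P : set I) (F : I -> \bar R) (c : R) : (0 < c)%R ->
  c%:E * (\sum_(i \in P) F i) = \sum_(i \in P) (c%:E * F i).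
Proof.
move=> c0.
have -> : finite_support 0 P (fun i => c%:E * F i) = finite_support 0 P F.
  have E : (fun i => c%:E * F i) @^-1` [set~ 0] = F @^-1` [set~ 0].
    apply/seteqP; split => i /=; apply: contra_not.
      by move=> ->; rewrite mule0.
    by move/eqP; rewrite mule_eq0 eqe gt_eqF //= => /eqP.
  by rewrite /finite_support !unlock E.
apply: (big_morph (fun x => c%:E * x)); first by move=> x y; exact: muleDr_pos.
by rewrite mule0.
Qed.

Lemma sintegral_scale {d} {T : measurableType d} (mu : set T -> \bar R) (h : T -> R) (c : R) :
  (0 < c)%R -> sintegral mu (fun x => c * h x)%R = c%:E * sintegral mu h.
Proof.
move=> c0; have c0' : c != 0%R by rewrite gt_eqF.
rewrite /sintegral fsum_scale // (reindex_fsbigT ( *%R c)); last first.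
  by exists ( *%R c^-1) => x /=; rewrite ?mulKf ?mulVKf.
apply: eq_fsbigr => i _.
have -> : (fun x => c * h x)%R @^-1` [set (c * i)%R] = h @^-1` [set i].
  by apply/seteqP; split => x /=; [move/(mulfI c0')|move=> ->].
by rewrite EFinM muleA.
Qed.

Definition nnint {d} {T : measurableType d} (mu : set T -> \bar R) (f : T -> \bar R) :=
  ereal_sup [set sintegral mu h |
  h in [set h : {nnsfun T >-> R} | forall x, (h x)%:E <= f x]].

Lemma integral_nnint {d} {T : measurableType d} (mu : set T -> \bar R) D (f : T -> \bar R) :
  \int[mu]_(x in D) f x = nnint mu ((f \_ D) ^\+) - nnint mu ((f \_ D) ^\-).
Proof. by []. Qed.

Lemma nnint_scale_le {d} {T : measurableType d} (mu : set T -> \bar R) (f : T -> \bar R) (c : R) :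
  (0 < c)%R -> nnint mu (fun x => c%:E * f x) <= c%:E * nnint mu f.
Proof.
move=> c0; apply: ge_ereal_sup => _ [h hle <-].
have ci0 : (0 <= c^-1)%R by rewrite invr_ge0 ltW.
pose h' := scale_nnsfun h ci0.
have -> : sintegral mu h = c%:E * sintegral mu h'.
  rewrite -sintegral_scale //; apply: eq_sintegral => x /=.
  by rewrite mulrA mulrV ?mul1r // unitfE gt_eqF.
rewrite lee_pmul2l ?lte_fin //; apply: ereal_sup_ubound; exists h' => //= x.
rewrite /= -(@lee_pmul2l _ c%:E) ?lte_fin // -EFinM mulrA mulrV ?mul1r ?unitfE ?gt_eqF //.
Qed.


Lemma nnint_scale {d} {T : measurableType d} (mu : set T -> \bar R) (f : T -> \bar R) (c : R) :
  (0 < c)%R -> nnint mu (fun x => c%:E * f x) = c%:E * nnint mu f.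
Proof.
move=> c0; apply/eqP; rewrite eq_le nnint_scale_le //=.
have ci0 : (0 < c^-1)%R by rewrite invr_gt0.
have := @nnint_scale_le _ _ mu (fun x => c%:E * f x) c^-1 ci0.
have -> : (fun x => c^-1%:E * (c%:E * f x)) = f.
  by apply/funext => x; rewrite muleA -EFinM mulVf ?gt_eqF // mul1e.
move=> H; rewrite -(@lee_pmul2l _ c^-1%:E) ?lte_fin // muleA -EFinM mulVf ?gt_eqF // mul1e.
exact: H.
Qed.

Lemma integral_scale {d} {T : measurableType d} (mu : set T -> \bar R) D (f : T -> \bar R) (c : R) :
  (0 < c)%R -> \int[mu]_(x in D) (c%:E * f x) = c%:E * \int[mu]_(x in D) f x.
Proof.
move=> c0; rewrite !integral_nnint.
have -> : (fun x => c%:E * f x) \_ D = (fun x => c%:E * (f \_ D) x).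
  by apply/funext => x; rewrite /patch; case: ifP; rewrite ?mule0.
rewrite ge0_funeposM ?ge0_funenegM ?ltW // !nnint_scale // muleDr_pos // muleN //.
Qed.


Section Zero.
Context {d} {T : measurableType d} (mu : set T -> \bar R) (mu0 : mu set0 = 0).

Lemma sintegral_zero (h : T -> R) : (forall x, h x = 0%R) -> sintegral mu h = 0.
Proof.
move=> h0; have -> : h = cst 0%R by apply/funext.
rewrite /sintegral; apply: fsbig1 => x _; rewrite preimage_cst.
have [->|x0] := eqVneq x 0%R; first by rewrite mul0e.
rewrite ifF ?mu0 ?mule0 //; apply/negbTE; apply/negP => /set_mem /= x0'.
by move/eqP: x0; apply; rewrite -x0'.
Qed.

Lemma nnint_ge0 f : 0 <= nnint mu f \/ True.
Proof. by right. Qed.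

Lemma nnint_ge0' (f : T -> \bar R) : (forall x, 0 <= f x) -> 0 <= nnint mu f.
Proof.
move=> f0; apply: ereal_sup_ubound; exists (nnsfun0 : {nnsfun T >-> R}) => //.
exact: sintegral_zero.
Qed.

Lemma nnint_le (f g : T -> \bar R) : (forall x, f x <= g x) -> nnint mu f <= nnint mu g.
Proof.
move=> fg; apply: ereal_sup_le => _ [h hf <-]; exists h => //= x.
exact: le_trans (hf x) (fg x).
Qed.

Lemma nnint_zero (f : T -> \bar R) : (forall x, f x = 0) -> nnint mu f = 0.
Proof.
move=> f0; apply/eqP; rewrite eq_le nnint_ge0' ?andbT; last by move=> x; rewrite f0.
apply: ge_ereal_sup => _ [h hf <-]; rewrite sintegral_zero // => x.
apply/eqP; rewrite eq_le fun_ge0 andbT -lee_fin; have := hf x; by rewrite f0.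
Qed.

Lemma integral_ge0' D (f : T -> \bar R) : (forall x, D x -> 0 <= f x) ->
  0 <= \int[mu]_(x in D) f x.
Proof.
move=> f0; rewrite integral_nnint (@nnint_zero (_ ^\-)) ?sube0; last first.
  move=> x; rewrite funenegE /patch; case: ifP => [/set_mem Dx|_].
    by apply/max_idPr; rewrite leeNl oppe0 f0.
  by rewrite oppe0 maxxx.
apply: nnint_ge0' => x; by rewrite funeposE le_max lexx orbT.
Qed.

Lemma integralT_nnint (f : T -> \bar R) : (forall x, 0 <= f x) ->
  \int[mu]_x f x = nnint mu f.
Proof.
move=> f0; rewrite integral_nnint patch_setT (@nnint_zero (_ ^\-)) ?sube0.
  by congr nnint; apply/funext => x; rewrite funeposE; apply/max_idPl.
by move=> x; rewrite funenegE; apply/max_idPr; rewrite leeNl oppe0.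
Qed.

Lemma integral_zero D (f : T -> \bar R) : (forall x, f x = 0) -> \int[mu]_(x in D) f x = 0.
Proof.
move=> f0; rewrite integral_nnint !nnint_zero ?sube0 //.
  by move=> x; rewrite funenegE /patch; case: ifP; rewrite ?f0 oppe0 maxxx.
by move=> x; rewrite funeposE /patch; case: ifP; rewrite ?f0 maxxx.
Qed.
End Zero.

End S.

Lemma arith (R : realType) (Dn e s1 s2 sg1 sg2 M A B IV IW IT IG : R) :
  0 < Dn -> 0 < e -> 0 < s1 -> s1 < s2 -> 0 <= A -> 0 <= B ->
  `|IV| <= sg1 * (A + B) -> `|IW| <= sg2 * (A + B) ->
  s1 * A + s2 * B - IW - Dn * IT = 0 ->
  e * IG <= 2 * IT ->
  0 < Dn * e * (1 - sg1) / 2 - 2 * (s2 + sg2) ->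
  Dn * e * M / (Dn * e * (1 - sg1) / 2 - 2 * (s2 + sg2)) <= A + B ->
  M <= A / 2 + B / 2 + IV / 2 - IG.
Proof.
move=> D0 e0 s10 s12 A0 B0 hV hW hP hG c0 KS.
set c := _ / 2 - _ in c0 KS.
have {}KS : Dn * e * M <= (A + B) * c.
  rewrite -(divfK (lt0r_neq0 c0) (Dn * e * M)); by rewrite ler_wpM2r // ltW.
move: hV hW; rewrite !ler_norml => /andP[hV1 hV2] /andP[hW1 hW2].
have P0 : 0 < Dn * e by rewrite mulr_gt0.
rewrite /c in KS c0.
have h1 : Dn * IT <= (s2 + sg2) * (A + B) by nra.
have h2 : Dn * e * IG <= 2 * (s2 + sg2) * (A + B) by nra.
have h3 : Dn * e * M <= Dn * e * (A / 2 + B / 2 + IV / 2 - IG) by nra.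
by rewrite -(ler_pM2l P0).
Qed.

Section More.
Context (R : realType).
Local Open Scope ereal_scope.

Lemma fine_scale (c : R) (x : \bar R) : (0 < c)%R -> fine (c%:E * x) = (c * fine x)%R.
Proof.
move=> c0; case: x => [r| |] /=; rewrite ?mulr0 //.
  by rewrite gt0_muley ?lte_fin.
by rewrite gt0_muleNy ?lte_fin.
Qed.

Lemma fine_le_scale (x y : \bar R) (k k' : R) : (0 < k)%R -> (0 < k')%R ->
  0 <= x -> 0 <= y -> x <= k%:E * y -> y <= k'%:E * x -> (fine x <= k * fine y)%R.
Proof.
move=> k0 k'0 x0 y0 xy yx; case: x x0 xy yx => [r| |] //= r0 xy yx.
  case: y y0 xy yx => [t| |] //= t0 xy yx.
by apply: mulr_ge0; [exact: ltW | exact: fine_ge0].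
Qed.

Lemma leb_tuple0 (n : nat) : leb_tuple R n set0 = 0.
Proof.
elim: n => [|n IH] /=; first by rewrite indicE in_set0.
rewrite /pushforward preimage_set0 /product_measure1.
by apply: integral_zero => [|x] /=; rewrite ?measure0 // xsection0 IH.
Qed.

Lemma leb_prod0 (n : nat) : (leb_tuple R n \x leb_tuple R n) set0 = 0.
Proof.
rewrite /product_measure1; apply: integral_zero => [|x] /=.
  exact: leb_tuple0.
by rewrite xsection0 leb_tuple0.
Qed.
End More.


Theorem corollary4p2 (R : realType) (d : nat) (s1 s2 a alpha beta : R)
  (sigma1 sigma2 sigma3 : R) (g : R -> R) (V : d.-tuple R -> R) :
  0 < s1 -> s1 < s2 -> s2 < 1 ->
  2 * s1 < d%:R -> d%:R < 2 * s1 * s2 / (s2 - s1) ->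
  0 < a ->
  condG1 g -> condG2 d s1 s2 alpha beta g -> condG3 alpha g ->
  condV1 s1 s2 alpha sigma1 V ->
  condV2 s1 s2 alpha beta sigma1 sigma2 V ->
  condV3 s1 s2 alpha sigma3 V ->
  forall M : R, exists K : R, forall u : d.-tuple R -> R,
    S_a s1 s2 a u -> P_func s1 s2 V g u = 0 ->
    K <= gnorm2 s1 u + gnorm2 s2 u -> M <= J_func s1 s2 V g u.
Proof.
move=> s10 s12 s21 ds1 dub a0 _ [h2a hab hb Gb] _ [_ _ /andP[sig10 _] V1b]
  [_ _ /andP[sig20 sig2b] W1b] _ M.
set Dn := (d%:R : R).
have D0 : 0 < Dn by apply: lt_trans ds1; rewrite mulr_gt0.
set e := alpha - 2.
have e0 : 0 < e.
  rewrite subr_gt0; apply: le_lt_trans h2a; rewrite lerDl divr_ge0 // ?ltW //.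
  by rewrite mulr_gt0 // (lt_trans s10 s12).
have sig2b' : sigma2 < Dn * e * (1 - sigma1) / 4 - s2.
  by move: sig2b; rewrite lt_min => /andP[_].
set c := Dn * e * (1 - sigma1) / 2 - 2 * (s2 + sigma2).
have c0 : 0 < c.
  rewrite /c subr_gt0; move: sig2b'; rewrite ltrBrDr => h.
  have h4 : 2 * (s2 + sigma2) < 2 * (Dn * e * (1 - sigma1) / 4) by rewrite ltr_pM2l // addrC.
  by apply: lt_le_trans h4 _; rewrite le_eqVlt; apply/orP; left; apply/eqP; field.
exists (Dn * e * M / c) => u [Hu L2] P0 KS.
have gnorm_ge0 : forall s, 0 <= gnorm2 s u.
  move=> s; apply: fine_ge0; apply: integral_ge0' => [|z _]; first exact: leb_prod0.
  rewrite lee_fin divr_ge0 // ?sqr_ge0 // powR_ge0 //.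
have [_ hV] := V1b u Hu.
have [intW hW] := W1b u Hu.
have Gge0 : forall t, 0 <= Gprim g t.
  move=> t; have [h1 h2] := Gb t.
  have : 0 <= (beta - alpha) * Gprim g t by rewrite mulrBl subr_ge0 (le_trans h1 h2).
  by rewrite pmulr_rge0 // subr_gt0.
have Gtge0 : forall t, 0 <= Gtilde g t.
  move=> t; have [h1 h2] := Gb t; rewrite /Gtilde subr_ge0 ler_pdivlMr //.
  have a2 : 2 < alpha by rewrite -subr_gt0.
  have := Gge0 t; nra.
have kG : forall t, Gprim g t <= (2 / e) * Gtilde g t.
  move=> t; have [h1 h2] := Gb t; rewrite mulrAC ler_pdivlMr // /Gtilde /e.
  have := Gge0 t; nra.
have kGt : forall t, Gtilde g t <= ((beta - 2) / 2) * Gprim g t.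
  move=> t; have [h1 h2] := Gb t; rewrite /Gtilde.
  have := Gge0 t; nra.
have b2 : 0 < (beta - 2) / 2.
  by rewrite divr_gt0 // subr_gt0 (lt_trans _ hab) // -subr_gt0.
have hG : intRd (fun x => Gprim g (u x)) <= (2 / e) * intRd (fun x => Gtilde g (u x)).
  rewrite /intRd !integralT_nnint; try exact: leb_tuple0; try by move=> x; rewrite lee_fin.
  apply: (@fine_le_scale R _ _ _ ((beta - 2) / 2)) => //.
  - by rewrite divr_gt0.
  - by apply: nnint_ge0'; [exact: leb_tuple0| move=> x; rewrite lee_fin].
  - by apply: nnint_ge0'; [exact: leb_tuple0| move=> x; rewrite lee_fin].
  - rewrite -nnint_scale ?divr_gt0 //; apply: nnint_le => x; rewrite -EFinM lee_fin; exact: kG.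
  - rewrite -nnint_scale //; apply: nnint_le => x; rewrite -EFinM lee_fin; exact: kGt.
have hGr : intRd (fun x => grad_dot_x V x * u x ^+ 2) = 2 * intRd (fun x => Wfun V x * u x ^+ 2).
  rewrite /intRd -fine_scale // -integral_scale //; congr fine.
  congr (integral _ _ _); apply/funext => x /=.
  by rewrite -EFinM /Wfun; congr EFin; field.
move: P0 KS; rewrite /P_func /J_func hGr => P0 KS.
apply: (@arith R Dn e s1 s2 sigma1 sigma2 M (gnorm2 s1 u) (gnorm2 s2 u) _
  (intRd (fun x => Wfun V x * u x ^+ 2)) (intRd (fun x => Gtilde g (u x))) _ D0 e0 s10 s12) => //.
- by apply: etrans P0; rewrite /Dn; field.
- by move: hG; rewrite mulrAC ler_pdivlMr // mulrC.
Qed.
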